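(* Let $I$ be the tridendriform ideal of $\mathcal{A}$ generated by $\{x\cdot y:x,y\in\mathcal A^+\}$, let $\overline{\Delta}$ be the coproduct induced by $\Delta$ on $\mathcal{A}/I$ and write $\bar x$ for the class of $x$. Define recursively, for every planar binary tree $t$, an element $\Delta_{LR}(t)\in(\mathcal A/I)\otimes(\mathcal A/I)$ of the form $\sum_{(X,s)}X\otimes\bar s$ (finite sum, $X\in\mathcal A/I$, $s$ binary trees) by $\Delta_{LR}(|)=\bar|\otimes\bar|$ and, for $t=t_1\vee t_2$ with $\Delta_{LR}(t_1)=\sum_{(X,s)}X\otimes\bar s$ and $\Delta_{LR}(t_2)=\sum_{(Z,r)}Z\otimes\bar r$, $$\Delta_{LR}(t)=\sum_{(X,s),(Z,r)}(X*Z)\otimes\overline{s\vee r}+\bar t\otimes\bar|.$$ Then $\overline{\Delta}(\bar t)=\Delta_{LR}(t)$ for every planar binary tree $t$ (this is the Loday–Ronco coproduct).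
   Context: Trees: planar rooted trees in which every internal vertex has at least two children; the root vertex hangs from a trunk edge; leaves are edges without upper vertex; $|$ is the one-leaf tree; binary trees are those in which every internal vertex has exactly two children. $\mathcal A$ is the $\mathbb K$-span of all trees, $\mathcal A^+$ that of trees $\neq|$. Products: $x_0\vee\cdots\vee x_k$ ($k\ge1$) grafts trees left to right on a new root; for $x=x^{(0)}\vee\cdots\vee x^{(k)}$, $y=y^{(0)}\vee\cdots\vee y^{(l)}$: $x\prec y=x^{(0)}\vee\cdots\vee x^{(k-1)}\vee(x^{(k)}*y)$, $x\cdot y=x^{(0)}\vee\cdots\vee x^{(k-1)}\vee(x^{(k)}*y^{(0)})\vee y^{(1)}\vee\cdots\vee y^{(l)}$, $x\succ y=(x*y^{(0)})\vee y^{(1)}\vee\cdots\vee y^{(l)}$, $*=\prec+\cdot+\succ$, $|*z=z*|=z$; for $a\in\mathcal A^+$: $|\prec a=0$, $a\prec|=a$, $|\succ a=a$, $a\succ|=0$, $|\cdot a=a\cdot|=0$. A tridendriform ideal is a subspace $J$ with $x\ltimes y\in J$ whenever $x\in J$ or $y\in J$; $*$ descends to $\mathcal A/I$. Coproduct: $\Delta(|)=|\otimes|$, $\Delta(t)=\sum_c G^c(t)\otimes P^c(t)$ over admissible cuts of $t$ (internal edges join two internal vertices; a cut is a nonempty set of internal edges, plus the empty and total (below the root) cuts; admissible if every root-to-leaf path meets at most one chosen edge; $P^c(t)$ the component containing the root, $G^c(t)$ the $*$-product of the cut-off trees from left to right; empty cut: $P^c=t,G^c=|$; total cut: $P^c=|,G^c=t$).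 One has $\Delta(I)\subseteq I\otimes\mathcal A+\mathcal A\otimes I$, so $\Delta$ induces $\overline\Delta:\mathcal A/I\to(\mathcal A/I)\otimes(\mathcal A/I)$. *)

(* Defs.v *)
From HB Require Import structures.
From mathcomp Require Import all_boot all_order all_algebra.
From mathcomp Require Import finmap.
From mathcomp.multinomials Require Import monalg.

Set Implicit Arguments.
Unset Strict Implicit.
Unset Printing Implicit Defensive.

Import GRing.Theory.
Local Open Scope ring_scope.

(* Planar rooted trees in which every internal vertex has >= 2 children.
   [Leaf] is the one-leaf tree |; [Node t0 t1 ts] is t0 \/ t1 \/ ... (the
   grafting of the trees t0 :: t1 :: ts, left to right, on a new root).   *)
Inductive tree := Leaf | Node of tree & tree & seq tree.

Fixpoint enc_tree (t : tree) : GenTree.tree unit :=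
  match t with
  | Leaf => GenTree.Leaf tt
  | Node a b r => GenTree.Node 0 (enc_tree a :: enc_tree b :: map enc_tree r)
  end.

Fixpoint dec_tree (g : GenTree.tree unit) : tree :=
  match g with
  | GenTree.Node _ (a :: b :: r) => Node (dec_tree a) (dec_tree b) (map dec_tree r)
  | _ => Leaf
  end.

Lemma enc_treeK : cancel enc_tree dec_tree.
Proof.
rewrite /cancel; fix IH 1; case => [|a b r] //=; rewrite !IH; congr Node.
elim: r => //= x r IHr; by rewrite IH IHr.
Qed.

HB.instance Definition _ := Countable.copy tree (can_type enc_treeK).

Definition mk (l : seq tree) : tree :=
  match l with a :: b :: r => Node a b r | _ => Leaf end.

Fixpoint tsize (t : tree) : nat :=
  match t with
  | Leaf => 1
  | Node a b r => (tsize a + tsize b + sumn (map tsize r)).+1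
  end.

Inductive btree := BLeaf | BNode of btree & btree.

Fixpoint emb (b : btree) : tree :=
  match b with BLeaf => Leaf | BNode l r => Node (emb l) (emb r) [::] end.

Section Algebra.
Variable K : fieldType.

(* The K-span A of all trees, and A (x) A (span of pairs of trees). *)
Definition A := {malg K[tree]}.
Definition AA := {malg K[(tree * tree)%type]}.

Definition tr (t : tree) : A := mkmalgU t 1.

Definition lin1 (f : tree -> A) (x : A) : A :=
  \sum_(a <- msupp x) x@_a *: f a.
Definition lin2 (f : tree -> tree -> A) (x y : A) : A :=
  \sum_(a <- msupp x) \sum_(b <- msupp y) (x@_a * y@_b) *: f a b.

Definition tens (x y : A) : AA :=
  \sum_(a <- msupp x) \sum_(b <- msupp y) (x@_a * y@_b) *: (mkmalgU (a, b) 1 : AA).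

Definition graft (pre : seq tree) (v : A) (post : seq tree) : A :=
  lin1 (fun t => tr (mk (pre ++ t :: post))) v.

(* The product * = < + . + > on trees, by recursion (with fuel
   n >= tsize x + tsize y, which is always enough). *)
Fixpoint starF (n : nat) (x y : tree) : A :=
  match n with
  | 0 => 0
  | n'.+1 =>
    match x, y with
    | Leaf, _ => tr y
    | _, Leaf => tr x
    | Node x0 x1 xs, Node y0 y1 ys =>
        graft (belast x0 (x1 :: xs)) (starF n' (last x1 xs) y) [::]
      + graft (belast x0 (x1 :: xs)) (starF n' (last x1 xs) y0) (y1 :: ys)
      + graft [::] (starF n' x y0) (y1 :: ys)
    end
  end.

Definition star (x y : tree) : A := starF (tsize x + tsize y) x y.

(* x < y,  x . y,  x > y  on trees (conventions for | as in the paper;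
   the value on (|,|) is never used) *)
Definition precT (x y : tree) : A :=
  match x, y with
  | Leaf, _ => 0
  | Node _ _ _, Leaf => tr x
  | Node x0 x1 xs, Node _ _ _ =>
      graft (belast x0 (x1 :: xs)) (star (last x1 xs) y) [::]
  end.

Definition dotT (x y : tree) : A :=
  match x, y with
  | Node x0 x1 xs, Node y0 y1 ys =>
      graft (belast x0 (x1 :: xs)) (star (last x1 xs) y0) (y1 :: ys)
  | _, _ => 0
  end.

Definition succT (x y : tree) : A :=
  match x, y with
  | _, Leaf => 0
  | Leaf, Node _ _ _ => tr y
  | Node _ _ _, Node y0 y1 ys => graft [::] (star x y0) (y1 :: ys)
  end.

Definition precA := lin2 precT.
Definition dotA := lin2 dotT.
Definition succA := lin2 succT.
Definition starA := lin2 star.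

Definition subspace (V : lmodType K) (J : V -> Prop) :=
  J 0 /\ forall (c : K) (u v : V), J u -> J v -> J (c *: u + v).

Definition tri_ideal (J : A -> Prop) :=
  subspace J /\
  forall x y : A, J x \/ J y -> [/\ J (precA x y), J (dotA x y) & J (succA x y)].

Definition Aplus (x : A) := x@_Leaf = 0.

Definition Iideal (x : A) : Prop :=
  forall J : A -> Prop, tri_ideal J ->
    (forall u v : A, Aplus u -> Aplus v -> J (dotA u v)) -> J x.

(* I (x) A + A (x) I, the kernel of A (x) A -> (A/I) (x) (A/I) *)
Definition Iker (w : AA) : Prop :=
  forall J : AA -> Prop, subspace J ->
    (forall x y : A, Iideal x -> J (tens x y)) ->
    (forall x y : A, Iideal y -> J (tens x y)) -> J w.

(* For a tree t, [cuts t] enumerates, once each, the sets of internal edges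
   of t meeting every root-to-leaf path at most once (including the empty
   set): each entry is (list of cut-off trees from left to right, the root
   component P^c(t)). *)
Fixpoint prod_opts (os : seq (seq (seq tree * tree))) : seq (seq tree * seq tree) :=
  match os with
  | [::] => [:: ([::], [::])]
  | o :: rest =>
      flatten [seq [seq (gp.1 ++ gps.1, gp.2 :: gps.2) | gps <- prod_opts rest]
              | gp <- o]
  end.

Fixpoint cuts (t : tree) : seq (seq tree * tree) :=
  match t with
  | Leaf => [:: ([::], Leaf)]
  | Node a b r =>
      let opts := fun c : tree =>
        (if c is Leaf then [::] else [:: ([:: c], Leaf)]) ++ cuts c in
      [seq (gps.1, mk gps.2) | gps <- prod_opts (opts a :: opts b :: map opts r)]
  end.

Definition star_list (gs : seq tree) : A :=
  foldr (fun g acc => starA (tr g) acc) (tr Leaf) gs.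

Definition Delta (t : tree) : AA :=
  match t with
  | Leaf => tens (tr Leaf) (tr Leaf)
  | Node _ _ _ =>
      \sum_(c <- cuts t) tens (star_list c.1) (tr c.2)
      + tens (tr t) (tr Leaf)
  end.

(* ---- Delta_LR on binary trees, as a list of pairs (X, s) standing for
   sum X (x) s-bar, where X is given by a representative in A ---- *)
Fixpoint LRlist (t : btree) : seq (A * btree) :=
  match t with
  | BLeaf => [:: (tr Leaf, BLeaf)]
  | BNode t1 t2 =>
      [seq (starA xs.1 zr.1, BNode xs.2 zr.2) | xs <- LRlist t1, zr <- LRlist t2]
      ++ [:: (tr (emb t), BLeaf)]
  end.

Definition DeltaLR (t : btree) : AA :=
  \sum_(p <- LRlist t) tens p.1 (tr (emb p.2)).

End Algebra.

(* Main.v *)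
Require Import Defs.
From HB Require Import structures.
From mathcomp Require Import all_boot all_order all_algebra.
From mathcomp Require Import finmap.
From mathcomp.multinomials Require Import monalg.
From mathcomp Require Import zify.
Import Defs.

Set Implicit Arguments.
Unset Strict Implicit.
Unset Printing Implicit Defensive.
Import GRing.Theory.
Local Open Scope fset_scope.
Local Open Scope ring_scope.

Section Tool.
Variable K : fieldType.

Definition L (T : choiceType) (V : lmodType K) (f : T -> V) (x : {malg K[T]}) : V :=
  \sum_(a <- msupp x) x@_a *: f a.

Definition is_lin (T : choiceType) (V : lmodType K) (F : {malg K[T]} -> V) :=
  forall c u v, F (c *: u + v) = c *: F u + F v.

Section L1.
Variables (T : choiceType) (V : lmodType K).
Implicit Types (f g : T -> V) (x u v : {malg K[T]}).

Lemma L_w f x (D : {fset T}) : msupp x `<=` D -> L f x = \sum_(a <- D) x@_a *: f a.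
Proof.
move=> le; rewrite /L (big_fset_incl _ le) // => a _ /mcoeff_outdom ->.
by rewrite scale0r.
Qed.

Lemma LD f u v : L f (u + v) = L f u + L f v.
Proof.
pose D := (msupp u `|` msupp v `|` msupp (u + v))%fset.
rewrite (@L_w f (u + v) D) ?fsubsetUr // (@L_w f u D); last first.
  by rewrite /D -fsetUA fsubsetUl.
rewrite (@L_w f v D); last by rewrite /D -fsetUA fsubsetU // fsubsetUl orbT.
by rewrite -big_split /=; apply: eq_bigr => a _; rewrite mcoeffD scalerDl.
Qed.

Lemma LZ f c u : L f (c *: u) = c *: L f u.
Proof.
rewrite (@L_w f _ (msupp u)) ?msuppZ_le // /L scaler_sumr.
by apply: eq_bigr => a _; rewrite mcoeffZ scalerA.
Qed.

Lemma L0 f : L f 0 = 0.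
Proof. by rewrite /L msupp0 big_seq_fset0. Qed.

Lemma is_lin_L f : is_lin (L f).
Proof. by move=> c u v; rewrite LD LZ. Qed.

Lemma LU f a c : L f (mkmalgU a c) = c *: f a.
Proof. by rewrite (@L_w f _ _ msuppU_le) big_seq_fset1 mcoeffUU. Qed.

Lemma L_fD f g x : L (fun a => f a + g a) x = L f x + L g x.
Proof. by rewrite /L -big_split; apply: eq_bigr => a _; rewrite scalerDr. Qed.

Lemma L_fZ f c x : L (fun a => c *: f a) x = c *: L f x.
Proof.
rewrite /L scaler_sumr; apply: eq_bigr => a _; by rewrite !scalerA mulrC.
Qed.

Lemma L_f0 x : L (fun _ => 0 : V) x = 0.
Proof. by rewrite /L big1 // => a _; rewrite scaler0. Qed.

Lemma eq_L f g x : f =1 g -> L f x = L g x.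
Proof. by move=> e; apply: eq_bigr => a _; rewrite e. Qed.

Lemma U_scale a c : mkmalgU a c = c *: (mkmalgU a 1 : {malg K[T]}).
Proof.
apply/malgP => k; rewrite mcoeffZ !mcoeffU; case: (a == k) => //=.
by rewrite mulr1. by rewrite mulr0.
Qed.

Lemma L_U_id x : L (fun a => mkmalgU a 1) x = x.
Proof.
rewrite [RHS]monalgE /L; apply: eq_bigr => a _; by rewrite -U_scale.
Qed.

End L1.

Section L2.
Variables (T : choiceType) (V W : lmodType K).

Lemma is_lin0 (F : V -> W) : (forall c u v, F (c *: u + v) = c *: F u + F v) -> F 0 = 0.
Proof.
move=> h; have := h 1 0 0; rewrite scaler0 addr0 scale1r => e.
by have := congr1 (fun z => z - F 0) e; rewrite subrr addrK => <-.
Qed.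

Lemma lin_sum (F : V -> W) (s : seq T) (c : T -> K) (v : T -> V) :
  (forall c u v, F (c *: u + v) = c *: F u + F v) ->
  F (\sum_(i <- s) c i *: v i) = \sum_(i <- s) c i *: F (v i).
Proof.
move=> h; elim: s => [|i s IH]; first by rewrite !big_nil (is_lin0 h).
by rewrite !big_cons h IH.
Qed.

Lemma lin_sum1 (F : V -> W) (s : seq T) (v : T -> V) :
  (forall c u v, F (c *: u + v) = c *: F u + F v) ->
  F (\sum_(i <- s) v i) = \sum_(i <- s) F (v i).
Proof.
move=> h; elim: s => [|i s IH]; first by rewrite !big_nil (is_lin0 h).
by rewrite !big_cons -IH; have := h 1 (v i) (\sum_(j <- s) v j); rewrite !scale1r.
Qed.

Lemma lin_comp (F : V -> W) (f : T -> V) x :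
  (forall c u v, F (c *: u + v) = c *: F u + F v) ->
  F (L f x) = L (fun a => F (f a)) x.
Proof. by move=> h; rewrite /L lin_sum. Qed.
End L2.

Lemma lin_L (T : choiceType) (W : lmodType K) (F : {malg K[T]} -> W) x :
  is_lin F -> F x = L (fun a => F (mkmalgU a 1)) x.
Proof. by move=> h; have := lin_comp (fun a => mkmalgU a 1) x h; rewrite L_U_id. Qed.

Lemma L_sum (T I : choiceType) (V : lmodType K) (f : T -> V) (s : seq I) (g : I -> {malg K[T]}) :
  L f (\sum_(i <- s) g i) = \sum_(i <- s) L f (g i).
Proof. apply: lin_sum1; exact: is_lin_L. Qed.

Lemma L_fsum (T I : Type) (T' : choiceType) (V : lmodType K) (s : seq I) (F : I -> T' -> V) x :
  L (fun a => \sum_(i <- s) F i a) x = \sum_(i <- s) L (F i) x.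
Proof.
rewrite /L exchange_big /=; apply: eq_bigr => a _; by rewrite scaler_sumr.
Qed.

Lemma L_exch (T1 T2 : choiceType) (V : lmodType K) (f : T1 -> T2 -> V) x y :
  L (fun a => L (fun b => f a b) y) x = L (fun b => L (fun a => f a b) x) y.
Proof.
rewrite /L; under eq_bigr do rewrite scaler_sumr.
rewrite exchange_big /=; apply: eq_bigr => b _; rewrite scaler_sumr.
apply: eq_bigr => a _; by rewrite !scalerA mulrC.
Qed.

Lemma is_lin_L2r (T1 T2 : choiceType) (V : lmodType K) (f : T1 -> T2 -> V) x :
  is_lin (fun y => L (fun a => L (f a) y) x).
Proof.
move=> c u v /=; rewrite -L_fZ -L_fD; apply: eq_L => a; by rewrite is_lin_L.
Qed.

End Tool.


Arguments Defs.tsize : simpl never.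

Section Trees.
Variable K : fieldType.
Local Notation A := (A K).
Local Notation tr := (tr K).
Local Notation star := (star K).
Local Notation starF := (starF K).
Local Notation precT := (precT K).
Local Notation dotT := (dotT K).
Local Notation succT := (succT K).

Lemma tsizeN a b r : tsize (Node a b r) = (tsize a + tsize b + sumn (map tsize r)).+1.
Proof. by []. Qed.

Lemma tsize_gt0 (t : tree) : (0 < tsize t)%N.
Proof. by case: t. Qed.

Lemma tsize_last x1 xs : (tsize (last x1 xs) <= tsize x1 + sumn (map tsize xs))%N.
Proof.
elim: xs x1 => [|x2 xs IH] x1 /=; first by rewrite addn0.
have := IH x2; lia.
Qed.

Lemma starF_fuel n m x y : (tsize x + tsize y <= n)%N -> (tsize x + tsize y <= m)%N ->
  starF n x y = starF m x y.
Proof.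
elim: n m x y => [|n IH] [|m] x y.
- by [].
- have := tsize_gt0 x; lia.
- have := tsize_gt0 x; lia.
move=> hn hm; case: x hn hm => [|x0 x1 xs]; case: y => [|y0 y1 ys] //= hn hm.
have h1 := tsize_last x1 xs.
have h2 := tsize_gt0 y1.
move: hn hm; rewrite !tsizeN => hn hm.
by rewrite (IH m (last x1 xs)) ?(IH m _ y0) ?tsizeN //=; lia.
Qed.

Lemma starE n x y : (tsize x + tsize y <= n)%N -> starF n x y = star x y.
Proof. by move=> h; rewrite /Defs.star (@starF_fuel n (tsize x + tsize y)). Qed.

Lemma star_l y : star Leaf y = tr y.
Proof. by rewrite /Defs.star /=; case: (tsize y) => //. Qed.

Lemma star_r x : star x Leaf = tr x.
Proof. by rewrite /Defs.star; case: x => //= x0 x1 xs; rewrite addn1. Qed.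

Lemma star_NN x0 x1 xs y0 y1 ys :
  star (Node x0 x1 xs) (Node y0 y1 ys) =
  precT (Node x0 x1 xs) (Node y0 y1 ys) + dotT (Node x0 x1 xs) (Node y0 y1 ys)
  + succT (Node x0 x1 xs) (Node y0 y1 ys).
Proof.
rewrite {1}/Defs.star.
set n := (tsize _ + tsize _)%N.
have hn : n = n.-1.+1 by rewrite /n tsizeN.
rewrite hn /=.
have h1 := tsize_last x1 xs.
have h2 := tsize_gt0 y1.
by rewrite !starE // /n ?tsizeN; lia.
Qed.

Lemma star_split_r a z : z != Leaf -> star a z = precT a z + dotT a z + succT a z.
Proof.
case: z => // z0 z1 zs _; case: a => [|a0 a1 as_].
  by rewrite star_l /= !add0r.
by rewrite star_NN.
Qed.

Lemma star_split_l x b : x != Leaf -> star x b = precT x b + dotT x b + succT x b.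
Proof.
case: x => // x0 x1 xs _; case: b => [|b0 b1 bs].
  by rewrite star_r /= !addr0.
by rewrite star_NN.
Qed.

Lemma lin2E (f : tree -> tree -> A) x y : lin2 f x y = L (fun a => L (f a) y) x.
Proof.
rewrite /lin2 /L; apply: eq_bigr => a _; rewrite scaler_sumr.
by apply: eq_bigr => b _; rewrite scalerA.
Qed.

Lemma lin2UU (f : tree -> tree -> A) a b : lin2 f (tr a) (tr b) = f a b.
Proof. by rewrite lin2E LU scale1r LU scale1r. Qed.

Lemma lin2U1 (f : tree -> tree -> A) a y : lin2 f (tr a) y = L (f a) y.
Proof. by rewrite lin2E LU scale1r. Qed.

Lemma lin2_1U (f : tree -> tree -> A) x b : lin2 f x (tr b) = L (fun a => f a b) x.
Proof. by rewrite lin2E; apply: eq_L => a; rewrite LU scale1r. Qed.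

Lemma lin2_linl (f : tree -> tree -> A) y : is_lin (fun x => lin2 f x y).
Proof. move=> c u v; rewrite !lin2E; exact: is_lin_L. Qed.

Lemma lin2_linr (f : tree -> tree -> A) x : is_lin (fun y => lin2 f x y).
Proof. move=> c u v; rewrite !lin2E; exact: is_lin_L2r. Qed.

Lemma lin2Dl (f : tree -> tree -> A) x1 x2 y : lin2 f (x1 + x2) y = lin2 f x1 y + lin2 f x2 y.
Proof. by have := lin2_linl f y 1 x1 x2; rewrite !scale1r. Qed.

Lemma lin2Dr (f : tree -> tree -> A) x y1 y2 : lin2 f x (y1 + y2) = lin2 f x y1 + lin2 f x y2.
Proof. by have := lin2_linr f x 1 y1 y2; rewrite !scale1r. Qed.

Lemma lin2_compl (f : tree -> tree -> A) (g : tree -> A) v y :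
  lin2 f (L g v) y = L (fun a => lin2 f (g a) y) v.
Proof. exact: (lin_comp _ _ (lin2_linl f y)). Qed.

Lemma lin2_compr (f : tree -> tree -> A) (g : tree -> A) x v :
  lin2 f x (L g v) = L (fun a => lin2 f x (g a)) v.
Proof. exact: (lin_comp _ _ (lin2_linr f x)). Qed.

Lemma L_tr (x : A) : L tr x = x.
Proof. exact: L_U_id. Qed.

Fixpoint Gaux (pre : seq tree) (vs : seq A) : A :=
  match vs with
  | [::] => tr (mk pre)
  | v :: vs' => L (fun a => Gaux (rcons pre a) vs') v
  end.
Definition Gm vs := Gaux [::] vs.

Lemma Gaux_tr pre q vs : Gaux pre (map tr q ++ vs) = Gaux (pre ++ q) vs.
Proof.
elim: q pre => [|a q IH] pre /=; first by rewrite cats0.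
by rewrite LU scale1r IH cat_rcons.
Qed.

Lemma Gaux_Gm pre vs : Gaux pre vs = Gm (map tr pre ++ vs).
Proof. by rewrite /Gm Gaux_tr. Qed.

Lemma Gm_tr q : Gm (map tr q) = tr (mk q).
Proof. by rewrite /Gm -[map tr q]cats0 Gaux_tr. Qed.

Lemma graftE pre v post : graft pre v post = Gm (map tr pre ++ v :: map tr post).
Proof.
rewrite -Gaux_Gm /= /graft /lin1; apply: eq_bigr => a _; congr (_ *: _).
by rewrite -[map tr post]cats0 Gaux_tr cat_rcons.
Qed.

End Trees.

Section Assoc.
Variable K : fieldType.
Local Notation A := (A K).
Local Notation tr := (tr K).
Local Notation star := (star K).
Local Notation precT := (precT K).
Local Notation dotT := (dotT K).
Local Notation succT := (succT K).

Lemma graftL pre (v : A) post : graft pre v post = L (fun t => tr (mk (pre ++ t :: post))) v.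
Proof. by []. Qed.

Lemma Gaux_trs pre q : Gaux pre (map tr q) = tr (mk (pre ++ q)).
Proof. by rewrite -[map tr q]cats0 Gaux_tr. Qed.

Lemma mk_rcons pre a : pre != [::] -> exists x0 x1 xs,
  [/\ mk (rcons pre a) = Node x0 x1 xs, belast x0 (x1 :: xs) = pre & last x1 xs = a].
Proof.
case: pre => // p0 pre _; exists p0; case: pre => [|p1 ps] /=.
  by exists a, [::].
by exists p1, (rcons ps a); rewrite belast_rcons last_rcons.
Qed.

Lemma precT_eq x0 x1 xs z :
  precT (Node x0 x1 xs) z = graft (belast x0 (x1 :: xs)) (star (last x1 xs) z) [::].
Proof.
case: z => [|z0 z1 zs] //=.
rewrite star_r graftE /= cats1 -map_rcons /= -lastI.
by rewrite -map_cons Gm_tr.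
Qed.

Lemma precT_mk pre a z : pre != [::] ->
  precT (mk (rcons pre a)) z = graft pre (star a z) [::].
Proof. by move=> /(mk_rcons a) [x0 [x1 [xs [-> <- <-]]]]; rewrite precT_eq. Qed.

Lemma dotT_mk pre a z0 z1 zs : pre != [::] ->
  dotT (mk (rcons pre a)) (Node z0 z1 zs) = graft pre (star a z0) (z1 :: zs).
Proof. by move=> /(mk_rcons a) [x0 [x1 [xs [-> <- <-]]]]. Qed.

Lemma succT_eq a z0 z1 zs : succT a (Node z0 z1 zs) = graft [::] (star a z0) (z1 :: zs).
Proof.
case: a => [|a0 a1 as_] //=.
by rewrite star_l graftE /= -!map_cons Gm_tr.
Qed.

Lemma starA_1U (x : A) b : starA x (tr b) = L (fun a => star a b) x.
Proof. exact: lin2_1U. Qed.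

Lemma starA_U1 a (y : A) : starA (tr a) y = L (star a) y.
Proof. exact: lin2U1. Qed.

Lemma K1aux z vs (v : A) pre : pre != [::] ->
  precA (Gaux pre (rcons vs v)) (tr z) = Gaux pre (rcons vs (starA v (tr z))).
Proof.
elim: vs pre => [|w vs IH] pre hpre /=.
  rewrite [LHS]lin2_compl starA_1U.
  rewrite (lin_comp _ _ (@is_lin_L _ _ _ _)).
  apply: eq_L => a; rewrite lin2UU precT_mk // graftL; apply: eq_L => b.
  by rewrite cats1.
rewrite [LHS]lin2_compl; apply: eq_L => a; fold (@precA K) (@dotA K); rewrite IH //.
by rewrite -size_eq0 size_rcons.
Qed.

Lemma K1 z w vs (v : A) :
  precA (Gm (w :: rcons vs v)) (tr z) = Gm (w :: rcons vs (starA v (tr z))).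
Proof. by rewrite /Gm /= [LHS]lin2_compl; apply: eq_L => a; fold (@precA K); rewrite K1aux. Qed.

Lemma K2aux z0 z1 zs vs (v : A) pre : pre != [::] ->
  dotA (Gaux pre (rcons vs v)) (tr (Node z0 z1 zs)) =
  Gaux pre (vs ++ starA v (tr z0) :: map tr (z1 :: zs)).
Proof.
elim: vs pre => [|w vs IH] pre hpre /=.
  rewrite [LHS]lin2_compl starA_1U.
  rewrite (lin_comp _ _ (@is_lin_L _ _ _ _)).
  apply: eq_L => a; rewrite lin2UU dotT_mk // graftL; apply: eq_L => b.
  by rewrite LU scale1r Gaux_trs !cat_rcons.
rewrite [LHS]lin2_compl; apply: eq_L => a; fold (@precA K) (@dotA K); rewrite IH //.
by rewrite -size_eq0 size_rcons.
Qed.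

Lemma K2 z0 z1 zs w vs (v : A) :
  dotA (Gm (w :: rcons vs v)) (tr (Node z0 z1 zs)) =
  Gm (w :: vs ++ starA v (tr z0) :: map tr (z1 :: zs)).
Proof. by rewrite /Gm /= [LHS]lin2_compl; apply: eq_L => a; fold (@dotA K); rewrite K2aux. Qed.

Lemma K3aux x0 x1 xs vs a pre : (0 < size pre + size vs)%N ->
  succA (tr (Node x0 x1 xs)) (Gaux (a :: pre) vs) =
  L (fun b => Gaux (b :: pre) vs) (star (Node x0 x1 xs) a).
Proof.
elim: vs pre => [|v vs IH] pre hs /=.
  case: pre hs => [|p0 ps] //= _.
  by rewrite [LHS]lin2UU.
rewrite [LHS]lin2_compr; fold (@succA K) (@dotA K).
under eq_L do rewrite IH ?size_rcons ?addSn //.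
by rewrite L_exch.
Qed.

Lemma K3 x0 x1 xs (v : A) vs : vs != [::] ->
  succA (tr (Node x0 x1 xs)) (Gm (v :: vs)) = Gm (starA (tr (Node x0 x1 xs)) v :: vs).
Proof.
move=> hvs; rewrite /Gm /= [LHS]lin2_compr starA_U1.
rewrite (lin_comp _ _ (@is_lin_L _ _ _ _)); apply: eq_L => a.
fold (@succA K); by rewrite K3aux //= lt0n size_eq0.
Qed.

Lemma K5aux x0 x1 xs vs a pre : (0 < size pre + size vs)%N ->
  dotA (tr (Node x0 x1 xs)) (Gaux (a :: pre) vs) =
  L (fun b => Gaux (belast x0 (x1 :: xs) ++ b :: pre) vs) (star (last x1 xs) a).
Proof.
elim: vs pre => [|v vs IH] pre hs /=.
  case: pre hs => [|p0 ps] //= _.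
  by rewrite [LHS]lin2UU.
rewrite [LHS]lin2_compr; fold (@succA K) (@dotA K).
under eq_L do rewrite IH ?size_rcons ?addSn //.
rewrite L_exch; apply: eq_L => b; apply: eq_L => c.
by rewrite rcons_cat rcons_cons.
Qed.

Lemma K5 x0 x1 xs (v : A) vs : vs != [::] ->
  dotA (tr (Node x0 x1 xs)) (Gm (v :: vs)) =
  Gm (map tr (belast x0 (x1 :: xs)) ++ starA (tr (last x1 xs)) v :: vs).
Proof.
move=> hvs; rewrite /Gm Gaux_tr /= [LHS]lin2_compr starA_U1.
rewrite (lin_comp _ _ (@is_lin_L _ _ _ _)); apply: eq_L => a.
fold (@dotA K); rewrite K5aux //= ?lt0n ?size_eq0 //; apply: eq_L => b.
by rewrite cats1.
Qed.

Lemma K4 (u : A) z0 z1 zs :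
  succA u (tr (Node z0 z1 zs)) = Gm (starA u (tr z0) :: map tr (z1 :: zs)).
Proof.
rewrite [LHS]lin2_1U /Gm /= starA_1U.
rewrite (lin_comp _ _ (@is_lin_L _ _ _ _)); apply: eq_L => a.
rewrite succT_eq graftL; apply: eq_L => b.
by rewrite LU scale1r Gaux_trs.
Qed.

Lemma K6 x0 x1 xs (v : A) :
  precA (tr (Node x0 x1 xs)) v =
  Gm (map tr (belast x0 (x1 :: xs)) ++ [:: starA (tr (last x1 xs)) v]).
Proof.
rewrite [LHS]lin2U1 /Gm Gaux_tr /= starA_U1.
rewrite (lin_comp _ _ (@is_lin_L _ _ _ _)); apply: eq_L => a.
rewrite precT_eq graftL; apply: eq_L => b.
by rewrite cats1.
Qed.

End Assoc.

Section Assoc2.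
Variable K : fieldType.
Local Notation A := (A K).
Local Notation tr := (tr K).
Local Notation star := (star K).
Local Notation precT := (precT K).
Local Notation dotT := (dotT K).
Local Notation succT := (succT K).

Lemma PT x0 x1 xs y : precT (Node x0 x1 xs) y =
  Gm (tr x0 :: rcons (map tr (belast x1 xs)) (star (last x1 xs) y)).
Proof. by rewrite precT_eq graftE /= cats1. Qed.

Lemma DT x0 x1 xs y0 y1 ys : dotT (Node x0 x1 xs) (Node y0 y1 ys) =
  Gm (tr x0 :: map tr (belast x1 xs) ++ star (last x1 xs) y0 :: map tr (y1 :: ys)).
Proof. by rewrite /= graftE. Qed.

Lemma ST x y0 y1 ys : succT x (Node y0 y1 ys) = Gm (star x y0 :: map tr (y1 :: ys)).
Proof. by rewrite succT_eq graftE. Qed.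

Lemma mapR y1 ys : map tr (y1 :: ys) = rcons (map tr (belast y1 ys)) (tr (last y1 ys)).
Proof. by rewrite -map_rcons -lastI. Qed.

Lemma rcons_neq0 (T : eqType) (s : seq T) a : rcons s a != [::].
Proof. by case: s. Qed.

Lemma cat_cons_neq0 (T : eqType) (s t : seq T) a : s ++ a :: t != [::].
Proof. by case: s. Qed.

Lemma map_cons_neq0 (a : tree) s : map tr (a :: s) != [::].
Proof. by []. Qed.

Lemma starUU a b : starA (tr a) (tr b) = star a b.
Proof. exact: lin2UU. Qed.

Lemma starA_split_r (u : A) z0 z1 zs :
  starA u (tr (Node z0 z1 zs)) = precA u (tr (Node z0 z1 zs)) + dotA u (tr (Node z0 z1 zs))
    + succA u (tr (Node z0 z1 zs)).
Proof.
rewrite /starA /precA /dotA /succA !lin2_1U -!L_fD; apply: eq_L => a.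
by rewrite star_split_r.
Qed.

Lemma starA_split_l x0 x1 xs (v : A) :
  starA (tr (Node x0 x1 xs)) v = precA (tr (Node x0 x1 xs)) v + dotA (tr (Node x0 x1 xs)) v
    + succA (tr (Node x0 x1 xs)) v.
Proof.
rewrite /starA /precA /dotA /succA !lin2U1 -!L_fD; apply: eq_L => a.
by rewrite star_split_l.
Qed.

Lemma ACsum (V : zmodType) (a b c d e f g : V) :
  a + c + e + (b + d + f) + g = a + (c + d + b) + (e + f + g).
Proof.
rewrite -!addrA; congr (_ + (_ + _)).
rewrite addrCA [RHS]addrCA; congr (_ + _); exact: addrCA.
Qed.

Lemma assoc_tree n x y z : (tsize x + tsize y + tsize z < n)%N ->
  starA (star x y) (tr z) = starA (tr x) (star y z).
Proof.
elim: n x y z => [|n IH] x y z //.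
move=> hs.
case: x hs => [|x0 x1 xs] hs.
  rewrite star_l starUU starA_U1.
  by under eq_L do rewrite star_l; rewrite L_tr.
case: y hs => [|y0 y1 ys] hs.
  by rewrite star_r star_l starUU.
case: z hs => [|z0 z1 zs] hs.
  rewrite star_r starUU /starA lin2_1U.
  by under eq_L do rewrite star_r; rewrite L_tr.
have hxk := tsize_last x1 xs.
have IH1 : starA (star (last x1 xs) (Node y0 y1 ys)) (tr (Node z0 z1 zs)) =
           starA (tr (last x1 xs)) (star (Node y0 y1 ys) (Node z0 z1 zs)).
  by apply: IH; move: hs; rewrite !tsizeN; lia.
have IH2 : starA (star (last x1 xs) (Node y0 y1 ys)) (tr z0) =
           starA (tr (last x1 xs)) (star (Node y0 y1 ys) z0).
  by apply: IH; move: hs; rewrite !tsizeN; lia.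
have IH3 : starA (star (Node x0 x1 xs) (Node y0 y1 ys)) (tr z0) =
           starA (tr (Node x0 x1 xs)) (star (Node y0 y1 ys) z0).
  by apply: IH; move: hs; rewrite !tsizeN; lia.
set x := Node x0 x1 xs; set y := Node y0 y1 ys; set z := Node z0 z1 zs.
have E1 : precA (precT x y) (tr z) = precA (tr x) (star y z).
  rewrite PT K1 IH1 K6; congr (Gm _); by rewrite /= cats1.
have E2 : precA (dotT x y) (tr z) = dotA (tr x) (precT y z).
  rewrite DT mapR -rcons_cons -rcons_cat K1 starUU.
  rewrite PT (K5 _ _ _ _ (rcons_neq0 _ _)) starUU; congr (Gm _).
  by rewrite /= rcons_cat rcons_cons.
have E3 : dotA (dotT x y) (tr z) = dotA (tr x) (dotT y z).
  rewrite DT mapR -rcons_cons -rcons_cat K2 starUU.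
  rewrite DT (K5 _ _ _ _ (cat_cons_neq0 _ _ _)) starUU; congr (Gm _).
  by rewrite /= -catA.
have E4 : dotA (precT x y) (tr z) = dotA (tr x) (succT y z).
  by rewrite PT K2 IH2 ST (K5 _ _ _ _ (map_cons_neq0 _ _)).
have E5 : precA (succT x y) (tr z) = succA (tr x) (precT y z).
  rewrite ST mapR K1 starUU PT (K3 _ _ _ _ (rcons_neq0 _ _)) starUU.
  by [].
have E6 : dotA (succT x y) (tr z) = succA (tr x) (dotT y z).
  rewrite ST mapR K2 starUU DT (K3 _ _ _ _ (cat_cons_neq0 _ _ _)) starUU.
  by [].
have E7 : succA (star x y) (tr z) = succA (tr x) (succT y z).
  by rewrite K4 IH3 ST (K3 _ _ _ _ (map_cons_neq0 _ _)).
have sxy : star x y = precT x y + dotT x y + succT x y by exact: star_NN.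
have syz : star y z = precT y z + dotT y z + succT y z by exact: star_NN.
rewrite starA_split_r starA_split_l -/x -/z E7 -E1 sxy syz.
rewrite /precA /dotA /succA !lin2Dl !lin2Dr; fold (@precA K) (@dotA K) (@succA K).
rewrite E2 E3 E4 E5 E6.
exact: ACsum.
Qed.

Lemma starA_assoc (u v w : A) : starA (starA u v) w = starA u (starA v w).
Proof.
have hw1 : is_lin (fun w => starA (starA u v) w) by exact: lin2_linr.
have hw2 : is_lin (fun w => starA u (starA v w)).
  by move=> k p q /=; rewrite /starA (lin2_linr _ v) (lin2_linr _ u).
rewrite (lin_L w hw1) (lin_L w hw2); apply: eq_L => c.
have hu1 : is_lin (fun u => starA (starA u v) (mkmalgU c 1)).
  by move=> k p q /=; rewrite /starA (lin2_linl _ v) (lin2_linl _ (mkmalgU c 1)).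
have hu2 : is_lin (fun u => starA u (starA v (mkmalgU c 1))) by exact: lin2_linl.
rewrite (lin_L u hu1) (lin_L u hu2); apply: eq_L => a.
have hv1 : is_lin (fun v : A => starA (starA (mkmalgU a 1) v) (mkmalgU c 1)).
  by move=> k p q /=; rewrite /starA lin2_linr lin2_linl.
have hv2 : is_lin (fun v : A => starA (mkmalgU a 1) (starA v (mkmalgU c 1))).
  by move=> k p q /=; rewrite /starA lin2_linl lin2_linr.
rewrite (lin_L v hv1) (lin_L v hv2); apply: eq_L => b.
have e : forall t, mkmalgU t 1 = tr t by [].
rewrite !e !starUU.
exact: (@assoc_tree (tsize a + tsize b + tsize c).+1).
Qed.

End Assoc2.

Section Main.
Variable K : fieldType.
Local Notation A := (A K).
Local Notation AA := (AA K).
Local Notation tr := (tr K).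
Local Notation star := (star K).
Local Notation precT := (precT K).
Local Notation dotT := (dotT K).
Local Notation succT := (succT K).

Lemma subspace_L (T : choiceType) (V : lmodType K) (J : V -> Prop) (f : T -> V) x :
  subspace J -> (forall a, J (f a)) -> J (L f x).
Proof.
move=> [J0 JD] hf; rewrite /L; elim: (msupp x : seq T) => [|a s IH].
  by rewrite big_nil.
by rewrite big_cons; apply: (JD).
Qed.

Lemma subspace_sum (I : Type) (V : lmodType K) (J : V -> Prop) (s : seq I) (f : I -> V) :
  subspace J -> (forall i, J (f i)) -> J (\sum_(i <- s) f i).
Proof.
move=> [J0 JD] hf; elim: s => [|a s IH]; first by rewrite big_nil.
by rewrite big_cons -[f a]scale1r; apply: (JD).
Qed.

Lemma subspaceD (V : lmodType K) (J : V -> Prop) u v : subspace J -> J u -> J v -> J (u + v).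
Proof. by move=> [_ JD] hu hv; rewrite -[u]scale1r; apply: (JD). Qed.

Lemma subspaceB (V : lmodType K) (J : V -> Prop) u v : subspace J -> J u -> J v -> J (u - v).
Proof.
move=> hJ hu hv; have [J0 JD] := hJ.
have -> : u - v = 1 *: u + (-1) *: v by rewrite scale1r scaleN1r.
by apply: (JD) => //; rewrite -[_ *: v]addr0; apply: (JD).
Qed.

Lemma Iideal_sub : subspace (@Iideal K).
Proof.
split; first by move=> J [[J0 _] _] _.
by move=> c u v hu hv J hJ hg; have [[_ JD] _] := hJ; apply: (JD); [apply: hu | apply: hv].
Qed.

Lemma Iideal_ops (x y : A) : Iideal x \/ Iideal y ->
  [/\ Iideal (precA x y), Iideal (dotA x y) & Iideal (succA x y)].
Proof.
move=> h; split=> J hJ hg; have [_ hJ2] := hJ;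
  (have [] : [/\ J (precA x y), J (dotA x y) & J (succA x y)] by
     apply: hJ2; case: h => [hx|hy]; [left; exact: hx | right; exact: hy]) => //.
Qed.

Lemma coefL_Leaf (f : tree -> A) x : (forall a, (f a)@_Leaf = 0) -> (L f x)@_Leaf = 0.
Proof.
move=> h; rewrite /L raddf_sum big1 // => a _ /=; by rewrite mcoeffZ h mulr0.
Qed.

Lemma coef_lin2 (f : tree -> tree -> A) x y : (forall a b, (f a b)@_Leaf = 0) ->
  (lin2 f x y)@_Leaf = 0.
Proof. by move=> h; rewrite lin2E; apply: coefL_Leaf => a; apply: coefL_Leaf. Qed.

Lemma coef_graft pre (v : A) post : (0 < size pre + size post)%N -> (graft pre v post)@_Leaf = 0.
Proof.
move=> hs; rewrite graftL; apply: coefL_Leaf => t; rewrite mcoeffU.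
case: pre hs => [|p0 pre] /=; first by case: post.
by case: pre => [|p1 pre] /=; [case: post | ].
Qed.

Lemma coefU (t : tree) : t != Leaf -> (tr t)@_Leaf = 0.
Proof. by move=> h; rewrite mcoeffU (negbTE h). Qed.

Lemma Aplus_tri : tri_ideal (@Aplus K).
Proof.
split.
  split; first by rewrite /Aplus mcoeff0.
  by move=> c u v; rewrite /Aplus mcoeffD mcoeffZ => -> ->; rewrite mulr0 addr0.
move=> x y _; split; rewrite /Aplus; apply: coef_lin2 => a b.
- case: a => [|a0 a1 as_] //=; first by rewrite mcoeff0.
  case: b => [|b0 b1 bs]; first by rewrite coefU.
  by rewrite coef_graft.
- case: a => [|a0 a1 as_]; case: b => [|b0 b1 bs] //=; try by rewrite mcoeff0.
  by rewrite coef_graft.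
- case: b => [|b0 b1 bs]; case: a => [|a0 a1 as_] //=; try by rewrite mcoeff0.
    by rewrite coefU.
  by rewrite coef_graft.
Qed.

Lemma Iideal_Aplus (x : A) : Iideal x -> x@_Leaf = 0.
Proof.
move=> h; apply: (h (@Aplus K) Aplus_tri) => u v _ _.
by rewrite /Aplus; apply: coef_lin2 => a b; case: a => [|? ? ?]; case: b => [|? ? ?] //=;
  rewrite ?mcoeff0 // coef_graft.
Qed.

Lemma eq_L_in (T : choiceType) (V : lmodType K) (f g : T -> V) x :
  (forall a, a \in msupp x -> f a = g a) -> L f x = L g x.
Proof.
move=> h; rewrite /L big_seq [RHS]big_seq; apply: eq_bigr => a ha; by rewrite h.
Qed.

Lemma starA_split (x y : A) : x@_Leaf = 0 \/ y@_Leaf = 0 ->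
  starA x y = precA x y + dotA x y + succA x y.
Proof.
move=> h; rewrite /starA /precA /dotA /succA !lin2E -!L_fD.
case: h => h.
  apply: eq_L_in => a ha; rewrite -!L_fD; apply: eq_L => b.
  apply: star_split_l; apply/eqP => e; move: ha; rewrite e -mcoeff_neq0 h.
  by rewrite eqxx.
apply: eq_L => a; rewrite -!L_fD; apply: eq_L_in => b hb.
apply: star_split_r; apply/eqP => e; move: hb; rewrite e -mcoeff_neq0 h.
by rewrite eqxx.
Qed.

Lemma Iideal_starl (x y : A) : Iideal x -> Iideal (starA x y).
Proof.
move=> hx; rewrite starA_split; last by left; apply: Iideal_Aplus.
have [h1 h2 h3] := @Iideal_ops x y (or_introl hx).
by apply: (subspaceD Iideal_sub) => //; apply: (subspaceD Iideal_sub).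
Qed.

Lemma Iideal_starr (x y : A) : Iideal y -> Iideal (starA x y).
Proof.
move=> hy; rewrite starA_split; last by right; apply: Iideal_Aplus.
have [h1 h2 h3] := @Iideal_ops x y (or_intror hy).
by apply: (subspaceD Iideal_sub) => //; apply: (subspaceD Iideal_sub).
Qed.

Definition G2 (y u : A) : A := lin2 (fun b d => tr (Node b d [::])) y u.

Lemma G2_succ y u : G2 y u = succA y (L (fun d => tr (Node Leaf d [::])) u).
Proof.
rewrite /G2 /succA lin2_compr lin2E L_exch; apply: eq_L => d.
rewrite lin2_1U; apply: eq_L => b.
by rewrite succT_eq star_r graftL LU scale1r.
Qed.

Lemma G2_prec y u : G2 y u = precA (L (fun b => tr (Node b Leaf [::])) y) u.
Proof.
rewrite /G2 /precA lin2_compl lin2E; apply: eq_L => b.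
rewrite lin2U1; apply: eq_L => d.
by rewrite precT_eq /= star_l graftL LU scale1r.
Qed.

Lemma Iideal_G2l (y u : A) : Iideal y -> Iideal (G2 y u).
Proof. by move=> hy; rewrite G2_succ; have [] := @Iideal_ops y (L (fun d => tr (Node Leaf d [::])) u) (or_introl hy). Qed.

Lemma Iideal_G2r (y u : A) : Iideal u -> Iideal (G2 y u).
Proof. by move=> hu; rewrite G2_prec; have [] := @Iideal_ops (L (fun b => tr (Node b Leaf [::])) y) u (or_intror hu). Qed.

Lemma Iker_sub : subspace (@Iker K).
Proof.
split; first by move=> J [J0 _].
by move=> c u v hu hv J hJ h1 h2; have [_ JD] := hJ; apply: (JD); [apply: hu | apply: hv].
Qed.

Lemma Iker_tl (x y : A) : Iideal x -> Iker (tens x y).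
Proof. by move=> hx J _ h1 _; apply: h1. Qed.

Lemma Iker_tr (x y : A) : Iideal y -> Iker (tens x y).
Proof. by move=> hy J _ _ h2; apply: h2. Qed.

Lemma tensE (x y : A) : tens x y = L (fun a => L (fun b => (mkmalgU (a, b) 1 : AA)) y) x.
Proof.
rewrite /tens /L; apply: eq_bigr => a _; rewrite scaler_sumr.
by apply: eq_bigr => b _; rewrite scalerA.
Qed.

Lemma tens_linl (y : A) : is_lin (fun x => tens x y).
Proof. by move=> c u v; rewrite !tensE is_lin_L. Qed.

Lemma tens_linr (x : A) : is_lin (fun y => tens x y).
Proof. by move=> c u v; rewrite !tensE is_lin_L2r. Qed.

Lemma tensUU a b : tens (tr a) (tr b) = mkmalgU (a, b) 1.
Proof. by rewrite tensE LU scale1r LU scale1r. Qed.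

Definition Phi (w v : AA) : AA :=
  L (fun k : tree * tree => L (fun l : tree * tree => tens (star k.1 l.1) (tr (Node k.2 l.2 [::]))) v) w.

Lemma Phi_linl v : is_lin (fun w => Phi w v).
Proof. exact: is_lin_L. Qed.

Lemma Phi_linr w : is_lin (fun v => Phi w v).
Proof. exact: is_lin_L2r. Qed.

End Main.

Section Main2.
Variable K : fieldType.
Local Notation A := (A K).
Local Notation AA := (AA K).
Local Notation tr := (tr K).
Local Notation star := (star K).
Local Notation star_list := (star_list K).

Lemma lin_B (T : choiceType) (V : lmodType K) (F : {malg K[T]} -> V) p q :
  is_lin F -> F (p - q) = F p - F q.
Proof.
move=> h; have := h (-1) q p; rewrite scaleN1r addrC => ->.
by rewrite scaleN1r addrC.
Qed.

Lemma Phi_compl (T : choiceType) (f : T -> AA) x v :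
  Phi (L f x) v = L (fun a => Phi (f a) v) x.
Proof. exact: (lin_comp _ _ (Phi_linl v)). Qed.

Lemma tens_compl (f : tree -> A) x y : tens (L f x) y = L (fun a => tens (f a) y) x.
Proof. exact: (lin_comp _ _ (tens_linl y)). Qed.

Lemma tens_compr (f : tree -> A) x y : tens x (L f y) = L (fun a => tens x (f a)) y.
Proof. exact: (lin_comp _ _ (tens_linr x)). Qed.

Lemma Phi_tens (x y z u : A) : Phi (tens x y) (tens z u) = tens (starA x z) (G2 y u).
Proof.
rewrite {1}tensE Phi_compl.
under eq_L do rewrite Phi_compl.
rewrite /starA lin2E tens_compl; apply: eq_L => a.
rewrite tens_compl.
under [RHS]eq_L do rewrite /G2 lin2E tens_compr.
rewrite L_exch; apply: eq_L => b.
rewrite /Phi LU scale1r /= tensE (lin_comp _ _ (@is_lin_L _ _ _ _)); apply: eq_L => c.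
rewrite (lin_comp _ _ (@is_lin_L _ _ _ _)) tens_compr; apply: eq_L => d.
by rewrite LU scale1r.
Qed.

Lemma G2UU a b : G2 (tr a) (tr b) = tr (Node a b [::]).
Proof. exact: lin2UU. Qed.

Lemma Phi_Iker_l (w v : AA) : Iker w -> Iker (Phi w v).
Proof.
move=> hw; move: v; refine (hw (fun w : AA => forall v : AA, Iker (Phi w v)) _ _ _).
- split; first by move=> v; rewrite /Phi L0; case: (@Iker_sub K).
  move=> c p q hp hq v; rewrite Phi_linl; case: (@Iker_sub K) => _ h; exact: h.
- move=> x y hx v; rewrite (lin_L v (Phi_linr _)); refine (@subspace_L K _ _ (@Iker K) _ _ (@Iker_sub K) _).
  case=> a b; rewrite -tensUU Phi_tens; apply: Iker_tl; exact: Iideal_starl.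
- move=> x y hy v; rewrite (lin_L v (Phi_linr _)); refine (@subspace_L K _ _ (@Iker K) _ _ (@Iker_sub K) _).
  case=> a b; rewrite -tensUU Phi_tens; apply: Iker_tr; exact: Iideal_G2l.
Qed.

Lemma Phi_Iker_r (w v : AA) : Iker v -> Iker (Phi w v).
Proof.
move=> hv; move: w; refine (hv (fun v : AA => forall w : AA, Iker (Phi w v)) _ _ _).
- split; first by move=> w; rewrite (is_lin0 (Phi_linr w)); case: (@Iker_sub K).
  move=> c p q hp hq w; rewrite Phi_linr; case: (@Iker_sub K) => _ h; exact: h.
- move=> x y hx w; rewrite (lin_L w (Phi_linl _)); refine (@subspace_L K _ _ (@Iker K) _ _ (@Iker_sub K) _).
  case=> a b; rewrite -tensUU Phi_tens; apply: Iker_tl; exact: Iideal_starr.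
- move=> x y hy w; rewrite (lin_L w (Phi_linl _)); refine (@subspace_L K _ _ (@Iker K) _ _ (@Iker_sub K) _).
  case=> a b; rewrite -tensUU Phi_tens; apply: Iker_tr; exact: Iideal_G2r.
Qed.

Definition opts (c : tree) : seq (seq tree * tree) :=
  (if c is Leaf then [::] else [:: ([:: c], Leaf)]) ++ cuts c.

Lemma cuts2 a b : cuts (Node a b [::]) =
  [seq (gps.1, mk gps.2) | gps <- prod_opts [:: opts a; opts b]].
Proof. by []. Qed.

Lemma cuts2_sum a b (F : seq tree * tree -> AA) :
  \sum_(c <- cuts (Node a b [::])) F c =
  \sum_(p <- opts a) \sum_(q <- opts b) F (p.1 ++ q.1, Node p.2 q.2 [::]).
Proof.
rewrite cuts2 big_map /= big_flatten big_map; apply: eq_bigr => p _.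
rewrite big_map big_flatten big_map; apply: eq_bigr => q _.
by rewrite big_seq1 /= cats0.
Qed.

Lemma star_list_cat g1 g2 : star_list (g1 ++ g2) = starA (star_list g1) (star_list g2).
Proof.
elim: g1 => [|g g1 IH] /=.
  rewrite starA_U1; under eq_L do rewrite star_l; by rewrite L_tr.
by rewrite IH starA_assoc.
Qed.

Lemma opts_sum c : \sum_(p <- opts c) tens (star_list p.1) (tr p.2) = Delta K c.
Proof.
case: c => [|c0 c1 cs]; first by rewrite /opts /= big_seq1.
rewrite /opts big_cat /= big_seq1 addrC /=.
by rewrite starUU star_r.
Qed.

Lemma Phi_suml (I : Type) (s : seq I) (f : I -> AA) v :
  Phi (\sum_(i <- s) f i) v = \sum_(i <- s) Phi (f i) v.
Proof.
elim: s => [|i s IH]; first by rewrite !big_nil (is_lin0 (Phi_linl v)).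
by rewrite !big_cons -IH; have := Phi_linl v 1 (f i) (\sum_(j <- s) f j); rewrite !scale1r.
Qed.

Lemma Phi_sumr (I : Type) (s : seq I) (f : I -> AA) w :
  Phi w (\sum_(i <- s) f i) = \sum_(i <- s) Phi w (f i).
Proof.
elim: s => [|i s IH]; first by rewrite !big_nil (is_lin0 (Phi_linr w)).
by rewrite !big_cons -IH; have := Phi_linr w 1 (f i) (\sum_(j <- s) f j); rewrite !scale1r.
Qed.

Lemma Phi_sum (I J : Type) (s : seq I) (t : seq J) (f : I -> AA) (g : J -> AA) :
  \sum_(i <- s) \sum_(j <- t) Phi (f i) (g j) = Phi (\sum_(i <- s) f i) (\sum_(j <- t) g j).
Proof.
rewrite Phi_suml; apply: eq_bigr => i _.
by rewrite Phi_sumr.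
Qed.

Lemma Delta_node a b :
  Delta K (Node a b [::]) = Phi (Delta K a) (Delta K b) + tens (tr (Node a b [::])) (tr Leaf).
Proof.
rewrite {1}/Delta cuts2_sum; congr (_ + _).
rewrite -!opts_sum -Phi_sum; apply: eq_bigr => p _; apply: eq_bigr => q _.
by rewrite Phi_tens G2UU star_list_cat.
Qed.

Lemma DeltaLR_node t1 t2 :
  DeltaLR K (BNode t1 t2) = Phi (DeltaLR K t1) (DeltaLR K t2)
    + tens (tr (emb (BNode t1 t2))) (tr Leaf).
Proof.
rewrite {1}/DeltaLR.
have -> : LRlist K (BNode t1 t2) = [seq (starA xs.1 zr.1, BNode xs.2 zr.2) | xs <- LRlist K t1, zr <- LRlist K t2]
  ++ [:: (tr (emb (BNode t1 t2)), BLeaf)] by [].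
rewrite big_cat big_seq1; congr (_ + _).
rewrite big_flatten big_map /DeltaLR -Phi_sum; apply: eq_bigr => p _.
rewrite big_map; apply: eq_bigr => q _.
by rewrite Phi_tens G2UU.
Qed.

End Main2.

Theorem mainTheorem19 (K : fieldType) (t : btree) :
  Iker (Delta K (emb t) - DeltaLR K t)%R.
Proof.
elim: t => [|t1 IH1 t2 IH2].
  have -> : Delta K (emb BLeaf) = tens (tr K Leaf) (tr K Leaf) by [].
  rewrite /DeltaLR.
  have -> : LRlist K BLeaf = [:: (tr K Leaf, BLeaf)] by [].
  by rewrite big_seq1 (subrr (tens (tr K Leaf) (tr K Leaf))); case: (@Iker_sub K).
rewrite DeltaLR_node.
have -> : emb (BNode t1 t2) = Node (emb t1) (emb t2) [::] by [].
rewrite Delta_node.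
rewrite opprD addrACA (subrr (tens (tr K (Node (emb t1) (emb t2) [::])) (tr K Leaf))) addr0.
have -> : Phi (Delta K (emb t1)) (Delta K (emb t2)) - Phi (DeltaLR K t1) (DeltaLR K t2) =
  Phi (Delta K (emb t1) - DeltaLR K t1) (Delta K (emb t2))
  + Phi (DeltaLR K t1) (Delta K (emb t2) - DeltaLR K t2).
  rewrite (lin_B _ _ (Phi_linl _)) (lin_B _ _ (Phi_linr _)).
  by rewrite addrA addrNK.
apply: (subspaceD (@Iker_sub K)).
  exact: Phi_Iker_l.
exact: Phi_Iker_r.
Qed.
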